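(* Let $a$ and $i$ be positive integers. Then $$\binom{3a+i}{a+i}-\binom{3a+2i}{a}=\sum_{k\geq1}\left\{\frac{i+3k}{i+k}\binom{i+k}{2k}-\binom{i}{k}\right\}\binom{3a+i}{a-k}.$$
   Context: Here $\binom{n}{m}$ denotes the ordinary binomial coefficient, with $\binom{n}{m}=0$ when $m<0$ or $m>n$ (so the sum is finite). *)

(* Defs.v *)
From mathcomp Require Import all_boot all_order all_algebra.

(* Main.v *)
Require Import Defs.
From mathcomp Require Import all_boot all_order all_algebra.
From mathcomp Require Import ring lra zify.
Import GRing.Theory Num.Theory.
Local Open Scope ring_scope.

Ltac pushc := rewrite ?(natrD, natrM, mulr0n); rewrite -?natr1 ?(natrD, natrM, mulr0n).

Ltac nzt := repeat (apply/andP; split); (apply: lt0r_neq0; lra).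

Lemma natq {R : realFieldType} {m n : nat} : m = n -> m%:R = n%:R :> R.
Proof. by move->. Qed.

Lemma perk (R : realFieldType) (i j m : nat) :
  let a := (m + j.+1)%N in let N := (3*a+i)%N in
  (a+i+1)%:R * (('C(i.+1 + j.+1, 2 * j.+1) + 'C(i.+1 + j, (2 * j).+1))%:R * 'C(N.+1, m)%:R)
  - (N.+1)%:R * (('C(i + j.+1, 2 * j.+1) + 'C(i + j, (2 * j).+1))%:R * 'C(N, m)%:R)
  = (if m is m'.+1 then - (N.+1)%:R * 'C(i + j.+1, 2 * j.+1)%:R * 'C(N, m')%:R else 0)
    - (- (N.+1)%:R * 'C(i+j, 2 * j)%:R * 'C(N,m)%:R) :> R.
Proof.
move=> a N.
have hi := ler0n R i; have hj := ler0n R j; have hm := ler0n R m.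
have e1 : (i.+1 + j.+1 = (i + j).+2)%N by lia.
have e2 : (i.+1 + j = (i + j).+1)%N by lia.
have e3 : (i + j.+1 = (i + j).+1)%N by lia.
have e4 : (2 * j.+1 = (2 * j).+2)%N by lia.
rewrite e1 e2 e3 e4.
have h1 := mul_bin_left (i + j) (2 * j).
have h2 := mul_bin_diag (i + j).+1 (2 * j).
have h3 := mul_bin_left (i + j).+1 (2 * j).+1.
have h4 := mul_bin_diag (i + j).+2 (2 * j).+1.
rewrite /= in h2 h4.
have e5 : (i + j - 2 * j = i - j)%N by lia.
have e6 : ((i + j).+1 - (2 * j).+1 = i - j)%N by lia.
rewrite e5 in h1; rewrite e6 in h3.
move: (natq (R:=R) h1) (natq (R:=R) h2) (natq (R:=R) h3) (natq (R:=R) h4); rewrite !natrM.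
move=> H1 H2 H3 H4.
rewrite (natrD _ 'C((i+j).+2, _)) (natrD _ 'C((i+j).+1, (2*j).+2)).
have hc : (j <= i)%N \/ 'C(i+j,2*j) = 0%N.
  by case: (leqP j i) => h; [left | right; apply: bin_small; lia].
move: H1 H2 H3 H4 hc.
move: 'C(i+j, 2*j) 'C(i+j, (2*j).+1) 'C((i+j).+1, (2*j).+1) 'C((i+j).+1, (2*j).+2) 'C((i+j).+2, (2*j).+2) => x u0 u1 v1 v2 H1 H2 H3 H4 hc.
have nz1 : (2*j).+1%:R != 0 :> R by rewrite pnatr_eq0.
have nz2 : (2*j).+2%:R != 0 :> R by rewrite pnatr_eq0.
have eU0 : u0%:R = (i-j)%:R * x%:R / (2*j).+1%:R :> R by rewrite -H1; field; nzt.
have eU1 : u1%:R = (i+j).+1%:R * x%:R / (2*j).+1%:R :> R by rewrite H2; field; nzt.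
have eV1 : v1%:R = (i-j)%:R * u1%:R / (2*j).+2%:R :> R by rewrite -H3; field; nzt.
have eV2 : v2%:R = (i+j).+2%:R * u1%:R / (2*j).+2%:R :> R by rewrite H4; field; nzt.
rewrite eV2 eV1 eU0 eU1.
have hc' : (i - j)%:R = i%:R - j%:R :> R \/ x = 0%N.
  by case: hc => h; [left; rewrite natrB | right].
clear -hc' hi hj hm nz1 nz2.
case: m @a @N hm => [|m'] a N hm.
  rewrite !bin0 {}/N {}/a.
  case: hc' => [->|->]; field; nzt.
have h5 := mul_bin_left N m'.
have h6 := mul_bin_diag N.+1 m'.
have hmN : (m' <= N)%N by rewrite /N /a; lia.
move: (natq (R:=R) h5) (natq (R:=R) h6); rewrite !natrM natrB //=.
move: 'C(N, m') 'C(N, m'.+1) 'C(N.+1, m'.+1) => y w0 w1 H5 H6.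
have nz3 : (m'.+1)%:R != 0 :> R by rewrite pnatr_eq0.
have eW0 : w0%:R = (N%:R - m'%:R) * y%:R / m'.+1%:R :> R by rewrite -H5; field; nzt.
have eW1 : w1%:R = N.+1%:R * y%:R / m'.+1%:R :> R by rewrite H6; field; nzt.
rewrite eW0 eW1; clear h5 h6 H5 H6 eW0 eW1; rewrite /N /a.
case: hc' => [->|->]; field; nzt.
Qed.

Definition cc (i k : nat) : nat :=
  if k is k'.+1 then ('C(i + k, 2 * k) + 'C(i + k', (2 * k').+1))%N else 1%N.

Definition gg (R : realFieldType) (a i k : nat) : R :=
  if k is k'.+1 then
    (if (k <= a)%N then - ((3*a+i).+1)%:R * 'C(i + k', 2 * k')%:R * 'C(3*a+i, a - k)%:R else 0)
  else 0.

Lemma perk2 (R : realFieldType) (a i k : nat) : (0 < a)%N -> (k <= a)%N ->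
  (a+i+1)%:R * ((cc i.+1 k)%:R * 'C((3*a+i).+1, a - k)%:R)
  - ((3*a+i).+1)%:R * ((cc i k)%:R * 'C(3*a+i, a - k)%:R)
  = gg R a i k.+1 - gg R a i k.
Proof.
move=> ha hk.
case: k hk => [|j] hk.
  rewrite /cc /gg /= ha subr0 subn0 addn0 muln0 bin0.
  case: a ha {hk} => [//|m] _.
  have h5 := mul_bin_left (3 * m.+1 + i) m.
  have h6 := mul_bin_diag (3 * m.+1 + i).+1 m.
  rewrite subn1 /=.
  move: (natq (R:=R) h5) (natq (R:=R) h6); rewrite !natrM natrB /=; last by lia.
  move: 'C(3 * m.+1 + i, m) 'C(3 * m.+1 + i, m.+1) 'C((3 * m.+1 + i).+1, m.+1) => y w0 w1 H5 H6.
  have hi := ler0n R i; have hm := ler0n R m.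
  have nz3 : (m.+1)%:R != 0 :> R by rewrite pnatr_eq0.
  have eW0 : w0%:R = ((3 * m.+1 + i)%:R - m%:R) * y%:R / m.+1%:R :> R by rewrite -H5; field; nzt.
  have eW1 : w1%:R = (3 * m.+1 + i).+1%:R * y%:R / m.+1%:R :> R by rewrite H6; field; nzt.
  rewrite eW0 eW1; field; nzt.
have [m em] : exists m, a = (m + j.+1)%N by exists (a - j.+1)%N; lia.
subst a.
have := perk R i j m.
rewrite /= /cc /gg.
have -> : (m + j.+1 - j.+1 = m)%N by lia.
rewrite hk.
clear ha; case: m hk => [|m'] hk.
  by rewrite /= ltnn => <-.
have -> : (j.+2 <= m'.+1 + j.+1)%N by lia.
have -> : (m'.+1 + j.+1 - j.+2 = m')%N by lia.
rewrite addn1 => ->. done.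
Qed.

Definition SS (R : realFieldType) (a i : nat) : R :=
  \sum_(0 <= k < a.+1) (cc i k)%:R * 'C(3*a+i, a - k)%:R.

Lemma step (R : realFieldType) (a i : nat) : (0 < a)%N ->
  (a+i+1)%:R * SS R a i.+1 = ((3*a+i).+1)%:R * SS R a i.
Proof.
move=> ha; apply/eqP; rewrite -subr_eq0; apply/eqP.
rewrite /SS !mulr_sumr -sumrB.
have -> : (3 * a + i.+1 = (3*a+i).+1)%N by rewrite addnS.
rewrite (eq_big_nat _ _ (F2 := fun k => gg R a i k.+1 - gg R a i k)); last first.
  move=> k /andP [_ hk]; apply: perk2 => //.
rewrite telescope_sumr // /gg ltnn subr0 //.
Qed.

Lemma SS0 (R : realFieldType) (a : nat) : SS R a 0 = 'C(3*a, a)%:R.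
Proof.
rewrite /SS big_nat_recl // big1_seq /=.
  by rewrite addn0 subn0 mul1r addr0.
move=> k _; rewrite /cc !add0n bin_small ?add0n; last by lia.
rewrite bin_small; last by lia.
by rewrite mul0r.
Qed.

Lemma SSval (R : realFieldType) (a i : nat) : (0 < a)%N ->
  SS R a i = 'C(3*a+i, a+i)%:R.
Proof.
move=> ha; elim: i => [|i IH]; first by rewrite SS0 !addn0.
have nz : (a + i + 1)%:R != 0 :> R by rewrite pnatr_eq0 addn1.
apply: (mulfI nz); rewrite step // IH.
have h := mul_bin_diag (3*a+i).+1 (a+i).
rewrite /= in h.
by rewrite -!natrM h !addnS ?addn0.
Qed.

Lemma ccE (R : realFieldType) (i k : nat) : (0 < k)%N ->
  ((i + 3 * k)%:R / (i + k)%:R) * ('C(i + k, 2 * k))%:R = (cc i k)%:R :> R.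
Proof.
case: k => [//|k] _.
rewrite /cc.
have h := mul_bin_diag (i + k.+1) (2 * k).+1.
have e : (i + k.+1).-1 = (i + k)%N by rewrite addnS.
have e2 : (2 * k.+1 = (2 * k).+2)%N by lia.
rewrite e in h; rewrite e2.
move: (natq (R:=R) h); rewrite !natrM.
have e3 : (i + k.+1 = (i + k).+1)%N by rewrite addnS.
rewrite e3.
move: 'C((i + k).+1, (2 * k).+2) 'C(i + k, (2 * k).+1) => x y H.
have hi := ler0n R i; have hk := ler0n R k.
have nz : (i + k).+1%:R != 0 :> R by rewrite pnatr_eq0.
rewrite (natrD _ x y).
have -> : y%:R = (2 * k).+2%:R * x%:R / (i + k).+1%:R :> R by apply: (mulfI nz); rewrite H; field; nzt.
field; nzt.
Qed.

Lemma mainR (R : realFieldType) (a i : nat) (ha : (0 < a)%N) (hi : (0 < i)%N) :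
  ('C(3 * a + i, a + i))%:R - ('C(3 * a + 2 * i, a))%:R
  = \sum_(1 <= k < a.+1)
      (((i + 3 * k)%:R / (i + k)%:R) * ('C(i + k, 2 * k))%:R - ('C(i, k))%:R)
        * ('C(3 * a + i, a - k))%:R :> R.
Proof.
rewrite (eq_big_nat _ _ (F2 := fun k => (cc i k)%:R * 'C(3*a+i, a-k)%:R - 'C(i,k)%:R * 'C(3*a+i,a-k)%:R)); last first.
  by move=> k /andP [hk _]; rewrite mulrBl ccE.
rewrite sumrB.
have e1 := @SSval R a i ha.
rewrite /SS big_nat_recl // in e1.
have v := binomial.Vandermonde i (3*a+i) a.
move: (natq (R:=R) v); rewrite natr_sum -(big_mkord xpredT (fun j => ('C(i, j) * 'C(3 * a + i, a - j))%:R)) big_nat_recl // => v'.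
rewrite !big_add1 ?succnK.
have -> : (3 * a + 2 * i = i + (3 * a + i))%N by lia.
rewrite -e1.
rewrite (eq_bigr (fun k => 'C(i,k.+1)%:R * 'C(3*a+i, a-k.+1)%:R)) in v'; last by move=> k _; rewrite natrM.
rewrite -v' (_ : cc i 0 = 1%N) // !subn0 bin0 natrM.
ring.
Qed.

(* Summation over k >= 1 restricted to 1 <= k <= a: for k > a the factor
   binom(3a+i, a-k) vanishes (a-k < 0). Computed in the rationals. *)
Theorem theorem2 (a i : nat) (ha : (0 < a)%N) (hi : (0 < i)%N) :
  ('C(3 * a + i, a + i))%:R - ('C(3 * a + 2 * i, a))%:R
  = \sum_(1 <= k < a.+1)
      (((i + 3 * k)%:R / (i + k)%:R) * ('C(i + k, 2 * k))%:R - ('C(i, k))%:R)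
        * ('C(3 * a + i, a - k))%:R :> rat.
Proof. by apply: (@mainR _ a i ha hi). Qed.
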